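(* Let $K=\mathbb{Z}/3$ and let $G=\mathcal{C}_{2\ell}$ be a cycle of length $s=2\ell$ ($\ell\ge2$). Then $$\dim_K C_X(d)=\begin{cases}2^{s-2}, & \text{if } d\ge \ell-1,\\[2pt] \sum_{i\ge0}\binom{s}{d-2i}, & \text{if } 0\le d\le \ell-2,\end{cases}$$ where $\binom{s}{k}=0$ for $k<0$.
   Context: Let $G$ have vertex set $\{1,\dots,n\}$ and edges $e_1,\dots,e_s$, identified with variables of $S=K[t_1,\dots,t_s]$, $K$ a finite field. Let $X\subseteq\mathbb{P}^{s-1}$ be the image of the projective torus $\{(x_1:\dots:x_n): x_i\neq0\}\subseteq\mathbb{P}^{n-1}$ under the map whose $k$-th coordinate is $x_ix_j$ when $e_k=\{i,j\}$. Order $X=\{P_1,\dots,P_m\}$. For $d\ge0$, $C_X(d)\subseteq K^m$ is the image of the space $S_d$ of degree-$d$ forms under $f\mapsto \big(f(P_1)/t_1^d(P_1),\dots,f(P_m)/t_1^d(P_m)\big)$. *)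

(* Defs.v *)
From HB Require Import structures.
From mathcomp Require Import all_boot all_algebra all_field.
From mathcomp Require Import mpoly.
Set Implicit Arguments. Unset Strict Implicit. Unset Printing Implicit Defensive.
Import GRing.Theory.
Local Open Scope ring_scope.

Notation K := 'F_3.

(* The cycle C_s on vertices 'I_s (0,...,s-1 in cyclic order);
   edge e_k = {k, k+1 mod s}.  The monomial map sends x to the vector
   (x_k * x_{k+1 mod s})_k. *)
(* s = n.+1 (in the theorem s = l.*2 >= 4, n = s.-1) *)
Definition cycle_vec (n : nat) (x : 'I_n.+1 -> K) : 'rV[K]_n.+1 :=
  \row_(k < n.+1) (x k * x (inZp k.+1 : 'I_n.+1)).

(* projective point of P^{s-1}(K) represented by a nonzero vector v:
   its class under scaling by nonzero scalars *)
Definition pclass (s : nat) (v : 'rV[K]_s) : {set 'rV[K]_s} :=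
  [set w | [exists c : K, (c != 0) && (w == c *: v)]].

Definition Xcyc (n : nat) : {set {set 'rV[K]_n.+1}} :=
  [set pclass (cycle_vec (fun i => x 0 i)) | x : 'rV[K]_n.+1 & [forall i, x 0 i != 0]].

Definition prep (s : nat) (P : {set 'rV[K]_s}) : 'rV[K]_s := odflt 0 [pick v in P].

Definition evX (n d : nat) (f : {mpoly K[n.+1]}) : 'rV[K]_#|Xcyc n| :=
  \row_(i < #|Xcyc n|)
    (let v := prep (enum_val i) in
     f.@[fun k => v 0 k] / (v 0 0) ^+ d).

Definition in_CX (n d : nat) (c : 'rV[K]_#|Xcyc n|) : Prop :=
  exists f : {mpoly K[n.+1]}, f \is d.-homog /\ c = evX d f.

(* Main.v *)
Require Import Defs.
From HB Require Import structures.
From mathcomp Require Import all_boot all_algebra all_field.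
From mathcomp Require Import mpoly.
From mathcomp Require Import zify.
Set Implicit Arguments. Unset Strict Implicit. Unset Printing Implicit Defensive.
Import GRing.Theory.
Local Open Scope ring_scope.

Lemma K_sq (a : K) : a != 0 -> a * a = 1.
Proof. by case: a => [[|[|[|i]]] Hi] //= _; apply: val_inj. Qed.
Lemma K_2 : (2 : K) != 0. Proof. by []. Qed.

Lemma K_expodd (a : K) m : a != 0 -> a ^+ m = a ^+ (odd m).
Proof.
move=> a0; rewrite -{1}(odd_double_half m) exprD -muln2 mulnC exprM expr2 K_sq //.
by rewrite expr1n mulr1.
Qed.

Definition succ n (k : 'I_n.+1) : 'I_n.+1 := inZp k.+1.

Lemma val_succ n (k : 'I_n.+1) : (succ k : nat) = if (k == n :> nat) then 0%N else k.+1.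
Proof.
rewrite /succ /=; case: eqP => [->|h]; first by rewrite modnn.
by rewrite modn_small //; have := ltn_ord k; lia.
Qed.

Lemma succ_inj n : injective (@succ n).
Proof.
move=> a b /(congr1 (@nat_of_ord _)); rewrite !val_succ => h.
have := ltn_ord a; have := ltn_ord b.
move: h; case: ifP => /eqP ha; case: ifP => /eqP hb; move=> *; apply: ord_inj; lia.
Qed.

Definition tor n (f : {ffun 'I_n.+1 -> K}) := [forall k, f k != 0].

Definition Fv n d (A : {set 'I_n.+1}) (v : 'rV[K]_n.+1) : K :=
  (\prod_(k in A) v 0 k) / (v 0 0) ^+ d.

Definition uu n (f : {ffun 'I_n.+1 -> K}) (k : 'I_n.+1) : K := f k * f (succ k).

Definition Phi n d (A : {set 'I_n.+1}) (f : {ffun 'I_n.+1 -> K}) : K :=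
  Fv d A (cycle_vec f).

Lemma cycle_vecE n (f : 'I_n.+1 -> K) k : cycle_vec f 0 k = f k * f (succ k).
Proof. by rewrite mxE. Qed.

Lemma PhiE n d A (f : {ffun 'I_n.+1 -> K}) :
  Phi d A f = (\prod_(k in A) uu f k) / (uu f 0) ^+ d.
Proof.
rewrite /Phi /Fv cycle_vecE; congr (_ / _).
by apply: eq_bigr => k _; rewrite cycle_vecE.
Qed.

Lemma uu_nz n (f : {ffun 'I_n.+1 -> K}) k : tor f -> uu f k != 0.
Proof. by move/forallP=> h; rewrite mulf_neq0. Qed.

Lemma Fv_scale n d (A : {set 'I_n.+1}) (v : 'rV[K]_n.+1) (c : K) :
  c != 0 -> odd #|A| = odd d -> Fv d A (c *: v) = Fv d A v.
Proof.
move=> c0 hA; rewrite /Fv.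
have -> : \prod_(k in A) (c *: v) 0 k = c ^+ #|A| * \prod_(k in A) v 0 k.
  rewrite -prodr_const -big_split /=; apply: eq_bigr => k _; by rewrite mxE.
rewrite mxE exprMn (K_expodd _ c0) hA -(K_expodd _ c0).
have cd : c ^+ d != 0 by rewrite expf_neq0.
by rewrite invfM mulrACA divff // mul1r.
Qed.

Lemma Xcyc_mem n P : P \in Xcyc n ->
  exists f : {ffun 'I_n.+1 -> K}, tor f /\ P = pclass (cycle_vec f).
Proof.
case/imsetP=> x; rewrite inE => hx ->.
exists [ffun i => x 0 i]; split.
  by apply/forallP=> i; rewrite ffunE; move/forallP: hx; apply.
by congr pclass; apply/rowP=> k; rewrite !mxE !ffunE.
Qed.

Lemma Xcyc_in n (f : {ffun 'I_n.+1 -> K}) : tor f -> pclass (cycle_vec f) \in Xcyc n.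
Proof.
move=> hf; apply/imsetP; exists (\row_i f i).
  by rewrite inE; apply/forallP=> i; rewrite mxE; move/forallP: hf; apply.
by congr pclass; apply/rowP=> k; rewrite !mxE.
Qed.

Lemma prep_pclass s (v : 'rV[K]_s) : exists c, c != 0 /\ prep (pclass v) = c *: v.
Proof.
rewrite /prep; case: pickP => [w|].
  by rewrite inE => /existsP [c /andP [c0 /eqP ->]]; exists c.
move/(_ v); rewrite inE => /negbT/negP; case; apply/existsP; exists 1.
by rewrite oner_eq0 scale1r eqxx.
Qed.

Lemma prep_val n (i : 'I_#|Xcyc n|) :
  exists f c, [/\ tor f, c != 0 & prep (enum_val i) = c *: cycle_vec f].
Proof.
have := enum_valP i => /Xcyc_mem [f [hf ->]].
by case: (prep_pclass (cycle_vec f)) => c [c0 ->]; exists f, c.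
Qed.

Lemma val_prep n (f : {ffun 'I_n.+1 -> K}) : tor f ->
  exists i : 'I_#|Xcyc n|, exists c, c != 0 /\ prep (enum_val i) = c *: cycle_vec f.
Proof.
move=> hf; have hin := Xcyc_in hf.
exists (enum_rank_in hin (pclass (cycle_vec f))).
by rewrite enum_rankK_in //; apply: prep_pclass.
Qed.

Definition Wv n d (A : {set 'I_n.+1}) : 'rV[K]_#|Xcyc n| :=
  \row_i Fv d A (prep (enum_val i)).

Lemma Wv_val n d (i : 'I_#|Xcyc n|) : exists f, tor f /\
  forall A : {set 'I_n.+1}, odd #|A| = odd d -> Wv d A 0 i = Phi d A f.
Proof.
case: (prep_val i) => f [c [hf c0 hv]]; exists f; split => // A hA.
by rewrite mxE hv Fv_scale.
Qed.

Lemma val_Wv n d (f : {ffun 'I_n.+1 -> K}) : tor f -> exists i : 'I_#|Xcyc n|,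
  forall A : {set 'I_n.+1}, odd #|A| = odd d -> Wv d A 0 i = Phi d A f.
Proof.
move=> hf; case: (val_prep hf) => i [c [c0 hv]]; exists i => A hA.
by rewrite mxE hv Fv_scale.
Qed.

Definition oddset n (m : 'X_{1..n.+1}) : {set 'I_n.+1} := [set k | odd (m k)].

Lemma evX_mono n d (m : 'X_{1..n.+1}) : evX d 'X_[m] = Wv d (oddset m).
Proof.
apply/rowP => i; rewrite !mxE /= mevalX /Fv; congr (_ / _).
case: (prep_val i) => f [c [hf c0 ->]].
rewrite [RHS]big_mkcond /=; apply: eq_bigr => k _.
have hk : (c *: cycle_vec f) 0 k != 0.
  by rewrite mxE cycle_vecE mulf_neq0 //; apply: uu_nz.
rewrite (K_expodd _ hk) inE; by case: (odd (m k)); rewrite ?expr1 ?expr0.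
Qed.

Definition tog (T : finType) (A B : {set T}) := (A :\: B) :|: (B :\: A).

Lemma prod_tog (T : finType) (F : T -> K) (A B : {set T}) :
  (forall k, F k * F k = 1) ->
  (\prod_(k in A) F k) * (\prod_(k in B) F k) = \prod_(k in tog A B) F k.
Proof.
move=> hF; rewrite (big_setID B) [X in _ * X](big_setID A) setIC.
rewrite mulrACA -big_split /= big1 ?mul1r; last by move=> k _; apply: hF.
rewrite /tog -bigU /=; last first.
  apply/pred0P => x /=; rewrite !inE; by case: (x \in A); case: (x \in B).
by apply: eq_bigl => x; rewrite !inE.
Qed.

Lemma Phi_mul n d (A B : {set 'I_n.+1}) (f : {ffun 'I_n.+1 -> K}) : tor f ->
  Phi d A f * Phi d B f = \prod_(k in tog A B) uu f k.
Proof.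
move=> hf; rewrite !PhiE mulf_div -exprMn K_sq ?uu_nz // expr1n divr1.
by apply: prod_tog => k; rewrite K_sq ?uu_nz.
Qed.

Lemma prod_all n (f : {ffun 'I_n.+1 -> K}) : tor f -> \prod_(k in [set: 'I_n.+1]) uu f k = 1.
Proof.
move=> hf; rewrite (eq_bigl xpredT); last by move=> k; rewrite inE.
have E : \prod_k f k = \prod_k f (succ k) := reindex_inj (@succ_inj n).
rewrite big_split /= -E -big_split /=.
by apply: big1 => k _; rewrite K_sq //; move/forallP: hf; apply.
Qed.

Lemma togvv (T : finType) (A : {set T}) : tog A A = set0.
Proof. by apply/setP => x; rewrite !inE; case: (x \in A). Qed.

Lemma togC (T : finType) (A : {set T}) : tog A (~: A) = setT.
Proof. by apply/setP => x; rewrite !inE; case: (x \in A). Qed.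

Lemma Phi_compl n d (A : {set 'I_n.+1}) (f : {ffun 'I_n.+1 -> K}) : tor f -> Phi d (~: A) f = Phi d A f.
Proof.
move=> hf; have h1 := Phi_mul d A A hf; have h2 := Phi_mul d A (~: A) hf.
rewrite togvv big_set0 in h1; rewrite togC prod_all // in h2.
by rewrite -[LHS]mul1r -h1 -mulrA h2 mulr1.
Qed.

Lemma odd_compl n (A : {set 'I_n.+1}) : odd (n.+1) = false -> odd #|~: A| = odd #|A|.
Proof.
move=> hs; have := cardsC A; rewrite card_ord => h.
have -> : #|~: A| = (n.+1 - #|A|)%N by lia.
by rewrite oddB ?hs //; lia.
Qed.

Lemma Wv_compl n d (A : {set 'I_n.+1}) : odd (n.+1) = false -> odd #|A| = odd d ->
  Wv d (~: A) = Wv d A.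
Proof.
move=> hs hA; apply/rowP => i; case: (Wv_val d i) => f [hf hW].
by rewrite !hW ?odd_compl // Phi_compl.
Qed.

Definition flip n (q : 'I_n.+1) (f : {ffun 'I_n.+1 -> K}) : {ffun 'I_n.+1 -> K} :=
  [ffun k => if k == q then - f k else f k].

Lemma flipK n q : involutive (@flip n q).
Proof. by move=> f; apply/ffunP => k; rewrite !ffunE; case: eqP => // _; rewrite opprK. Qed.

Lemma tor_flip n q f : tor (@flip n q f) = tor f.
Proof.
rewrite /tor; apply/forallP/forallP => h k; move: (h k); rewrite !ffunE;
  by case: (k == q); rewrite ?oppr_eq0.
Qed.

Lemma up_closed n (C : {set 'I_n.+1}) : (forall j, j \in C -> succ j \in C) ->
  forall (j0 k : 'I_n.+1), j0 \in C -> (j0 <= k)%N -> k \in C.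
Proof.
move=> H j0 k hj0 hle.
suff: forall m (k : 'I_n.+1), (k : nat) = (j0 + m)%N -> k \in C.
  by move/(_ (k - j0)%N k); apply; lia.
elim=> [|m IH] k' hk.
  by have -> : k' = j0 by apply: ord_inj; lia.
have hlt : (k'.-1 < n.+1)%N by have := ltn_ord k'; lia.
have -> : k' = succ (Ordinal hlt).
  apply: ord_inj; rewrite val_succ /=; have := ltn_ord k'.
  case: ifP => /eqP; lia.
by apply: H; apply: IH => /=; lia.
Qed.

Lemma boundary n (C : {set 'I_n.+1}) : C != set0 -> C != setT ->
  exists2 j, j \in C & succ j \notin C.
Proof.
move=> h0 hT; case: (boolP [exists j, (j \in C) && (succ j \notin C)]).
  by case/existsP => j /andP [] *; exists j.
rewrite negb_exists => /forallP H.
have H' : forall j, j \in C -> succ j \in C.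
  by move=> j hj; move: (H j); rewrite hj /= negbK.
case/set0Pn: h0 => j0 hj0.
have hmax : (ord_max : 'I_n.+1) \in C by apply: (up_closed H' hj0) => /=; have := ltn_ord j0; lia.
have h0' : (ord0 : 'I_n.+1) \in C.
  have -> : (ord0 : 'I_n.+1) = succ ord_max by apply: ord_inj; rewrite val_succ /= eqxx.
  by apply: H'.
case/negP: hT; apply/eqP/setP => k; rewrite inE; exact: (up_closed H' h0').
Qed.

Lemma sum_tor_prod n (C : {set 'I_n.+1}) : C != set0 -> C != setT ->
  \sum_(f | tor f) \prod_(k in C) uu f k = 0.
Proof.
move=> h0 hT; case: (boundary h0 hT) => j hj hq.
set q := succ j.
have hfl : forall f, \prod_(k in C) uu (flip q f) k = - \prod_(k in C) uu f k.
  move=> f; rewrite (bigD1 j) //= [in RHS](bigD1 j) //= -mulNr; congr (_ * _).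
    have hjq : (j == q) = false by apply/eqP => e; move: hj; rewrite e (negbTE hq).
    by rewrite /uu !ffunE hjq eqxx mulrN.
  apply: eq_bigr => k /andP [hk hkj].
  have hkq : (k == q) = false by apply/eqP => e; move: hk; rewrite e (negbTE hq).
  have hsq : (succ k == q) = false.
    by apply/eqP => /succ_inj e; move: hkj; rewrite e eqxx.
  by rewrite /uu !ffunE hkq hsq.
set S := (X in X = 0).
have HS : S = - S.
  rewrite /S [LHS](reindex_inj (can_inj (flipK q))) /=.
  rewrite [LHS](eq_bigl (fun f => tor f)); last by move=> f; rewrite tor_flip.
  by rewrite -sumrN; apply: eq_bigr => f _; rewrite hfl.
have : S *+ 2 = 0 by rewrite mulr2n {1}HS addNr.
by rewrite -mulr_natr => /eqP; rewrite mulf_eq0 (negbTE K_2) orbF => /eqP.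
Qed.

Lemma card_tor n : #|[pred f : {ffun 'I_n.+1 -> K} | tor f]| = (2 ^ n.+1)%N.
Proof.
transitivity (#|predC1 (0%R : K)| ^ #|'I_n.+1|)%N; last by rewrite cardC1 card_Fp // card_ord.
rewrite -(card_ffun_on 'I_n.+1 (predC1 (0%R : K))).
apply: eq_card => f; rewrite !inE; by [].
Qed.

Definition Rset n d : {set {set 'I_n.+1}} :=
  [set A : {set 'I_n.+1} | [&& ord0 \notin A, odd #|A| == odd d &
                               (#|A| <= d)%N || (#|~: A| <= d)%N]].

Definition Xt n d := mktuple (fun i : 'I_#|Rset n d| => Wv d (enum_val i)).

Lemma Rset_par n d A : A \in Rset n d -> odd #|A| = odd d.
Proof. by rewrite inE => /and3P [_ /eqP ->]. Qed.

Lemma Rset_0 n d A : A \in Rset n d -> ord0 \notin A.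
Proof. by rewrite inE => /and3P []. Qed.

Lemma tog_eq0 (T : finType) (A B : {set T}) : tog A B = set0 -> A = B.
Proof.
move/setP => h; apply/setP => x; move: (h x); rewrite !inE.
by case: (x \in A); case: (x \in B).
Qed.

Lemma tog_T (T : finType) (a : T) (A B : {set T}) : a \notin A -> a \notin B -> tog A B != setT.
Proof.
move=> ha hb; apply/eqP => /setP /(_ a); rewrite !inE.
by rewrite (negbTE ha) (negbTE hb).
Qed.

Lemma Xt_free n d : free (Xt n d).
Proof.
apply/freeP => k Hk j.
have E : forall f, tor f -> \sum_i k i * Phi d (enum_val i) f = 0.
  move=> f hf; case: (val_Wv d hf) => idx hidx.
  have := congr1 (fun M : 'rV[K]_#|Xcyc n| => M 0 idx) Hk; rewrite /= summxE mxE => H; rewrite -[X in _ = X]H.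
  apply: eq_bigr => i _; rewrite mxE nth_mktuple hidx //.
  by apply: Rset_par; apply: enum_valP.
have : \sum_(f | tor f) Phi d (enum_val j) f * (\sum_i k i * Phi d (enum_val i) f) = 0.
  by apply: big1 => f hf; rewrite E // mulr0.
rewrite (eq_bigr (fun f => \sum_i k i * (Phi d (enum_val j) f * Phi d (enum_val i) f)));
  last by move=> f _; rewrite mulr_sumr; apply: eq_bigr => i _; rewrite mulrCA.
rewrite exchange_big /= (bigD1 j) //= [X in _ + X]big1 ?addr0; last first.
  move=> i hij; rewrite -mulr_sumr.
  rewrite (eq_bigr (fun f => \prod_(x in tog (enum_val j) (enum_val i)) uu f x));
    last by move=> f hf; rewrite Phi_mul.
  rewrite sum_tor_prod ?mulr0 //.
    apply/eqP => /tog_eq0 /enum_val_inj e; by move: hij; rewrite e eqxx.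
  by apply: (@tog_T _ ord0); apply: Rset_0; apply: enum_valP.
rewrite -mulr_sumr.
rewrite (eq_bigr (fun f => 1)); last by move=> f hf; rewrite Phi_mul // togvv big_set0.
rewrite sumr_const card_tor => /eqP; rewrite mulf_eq0 => /orP [/eqP //|].
by rewrite natrX expf_eq0 (negbTE K_2) andbF.
Qed.

Lemma dimX n d : \dim <<Xt n d>> = #|Rset n d|.
Proof. by rewrite (eqP (Xt_free n d)) size_tuple. Qed.

Lemma evXD n d (f g : {mpoly K[n.+1]}) : evX d (f + g) = evX d f + evX d g.
Proof. by apply/rowP => i; rewrite !mxE /= mevalD mulrDl. Qed.
Lemma evXZ n d a (f : {mpoly K[n.+1]}) : evX d (a *: f) = a *: evX d f.
Proof. by apply/rowP => i; rewrite !mxE /= mevalZ mulrA. Qed.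
Lemma evX0 n d : evX (n := n) d 0 = 0.
Proof. by apply/rowP => i; rewrite !mxE /= meval0 mul0r. Qed.
Lemma evX_sum n d (I : Type) (r : seq I) (P : pred I) (F : I -> {mpoly K[n.+1]}) :
  evX d (\sum_(i <- r | P i) F i) = \sum_(i <- r | P i) evX d (F i).
Proof. exact: (big_morph _ (@evXD n d) (@evX0 n d)). Qed.

Definition mk n d (B : {set 'I_n.+1}) : 'X_{1..n.+1} :=
  [multinom ((i \in B) + (if i == ord0 then (d - #|B|) else 0))%N | i < n.+1].

Lemma mk_deg n d (B : {set 'I_n.+1}) : (#|B| <= d)%N -> mdeg (mk d B) = d.
Proof.
move=> hB; rewrite mdegE (eq_bigr _ (fun i _ => mnmE _ i)) big_split /=.
by rewrite -big_mkcond /= sum1_card -big_mkcond /= big_pred1_eq subnKC.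
Qed.

Lemma mk_odd n d (B : {set 'I_n.+1}) : (#|B| <= d)%N -> odd #|B| = odd d ->
  oddset (mk d B) = B.
Proof.
move=> hB hp; apply/setP => k; rewrite inE mnmE oddD.
case: eqP => _; last by rewrite addbF; case: (k \in B).
by rewrite oddB // hp addbb addbF; case: (k \in B).
Qed.

Definition mon n d (A : {set 'I_n.+1}) :=
  if (#|A| <= d)%N then mk d A else mk d (~: A).

Lemma mon_ok n d (A : {set 'I_n.+1}) : odd n.+1 = false -> A \in Rset n d ->
  mdeg (mon d A) = d /\ Wv d (oddset (mon d A)) = Wv d A.
Proof.
move=> hs hA; have hp := Rset_par hA; rewrite /mon; case: ifP => h.
  by rewrite mk_deg // mk_odd.
move: hA; rewrite inE h /= => /and3P [_ _ h'].
have hp' : odd #|~: A| = odd d by rewrite odd_compl.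
by rewrite mk_deg // mk_odd // Wv_compl.
Qed.

Lemma oddset_card n (m : 'X_{1..n.+1}) : (#|oddset m| <= mdeg m)%N.
Proof.
rewrite mdegE -sum1_card big_mkcond /=; apply: leq_sum => i _.
rewrite inE; case h: (odd (m i)) => //; rewrite lt0n; by apply: contraTneq h => ->.
Qed.

Lemma oddset_odd n (m : 'X_{1..n.+1}) : odd #|oddset m| = odd (mdeg m).
Proof.
rewrite mdegE (eq_bigr (fun i => odd (m i) + (m i)./2 * 2)%N); last first.
  by move=> i _; rewrite muln2 odd_double_half.
rewrite big_split /= -sum1_card big_mkcond /=.
rewrite -big_distrl /= oddD oddM /= andbF addbF; congr odd.
by apply: eq_bigr => i _; rewrite inE; case: (odd (m i)).
Qed.

Lemma memX_R n d (A : {set 'I_n.+1}) : A \in Rset n d -> Wv d A \in <<Xt n d>>%VS.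
Proof.
move=> hA; apply: memv_span.
have -> : Wv d A = tnth (Xt n d) (enum_rank_in hA A) by rewrite tnth_mktuple enum_rankK_in.
exact: mem_tnth.
Qed.

Lemma memX_W n d (B : {set 'I_n.+1}) : odd n.+1 = false -> (#|B| <= d)%N -> odd #|B| = odd d ->
  Wv d B \in <<Xt n d>>%VS.
Proof.
move=> hs hB hp; case: (boolP (ord0 \in B)) => h0.
  rewrite -(Wv_compl hs hp); apply: memX_R.
  rewrite inE !inE h0 /= odd_compl // hp eqxx setCK hB orbT //.
apply: memX_R; by rewrite inE h0 hp eqxx hB.
Qed.

Lemma memX n d c : odd n.+1 = false -> (c \in <<Xt n d>>%VS <-> in_CX d c).
Proof.
move=> hs; split.
  move/coord_span => ->.
  exists (\sum_i coord (Xt n d) i c *: 'X_[mon d (enum_val i)]); split.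
    apply: rpred_sum => i _; apply: rpredZ; rewrite dhomogX.
    by apply/eqP; case: (mon_ok hs (enum_valP i)) => h _; exact: h.
  rewrite evX_sum; apply: eq_bigr => i _; rewrite evXZ evX_mono nth_mktuple.
  by case: (mon_ok hs (enum_valP i)) => _ ->.
case=> f [hf ->]; rewrite (mpolyE f) evX_sum big_seq.
apply: memv_suml => m hm; rewrite evXZ; apply: memvZ; rewrite evX_mono.
have hd : mdeg m = d by apply: (dhomog_mf hf hm).
apply: memX_W => //; first by rewrite -hd oddset_card.
by rewrite oddset_odd hd.
Qed.

Lemma card_swap (T : finType) (S1 S2 : {set T}) (g : T -> T) : involutive g ->
  (forall x, x \in S1 -> g x \in S2) -> (forall x, x \in S2 -> g x \in S1) ->
  #|S1| = #|S2|.
Proof.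
move=> hg h1 h2; apply/eqP; rewrite eqn_leq; apply/andP; split.
  rewrite -(card_imset S1 (inv_inj hg)); apply: subset_leq_card.
  by apply/subsetP => y /imsetP [x hx ->]; exact: h1.
rewrite -(card_imset S2 (inv_inj hg)); apply: subset_leq_card.
by apply/subsetP => y /imsetP [x hx ->]; exact: h2.
Qed.

Lemma card_le_inj (T : finType) (S1 S2 : {set T}) (g : T -> T) :
  {in S1 &, injective g} -> (forall x, x \in S1 -> g x \in S2) -> (#|S1| <= #|S2|)%N.
Proof.
move=> hg h1; rewrite -(card_in_imset hg); apply: subset_leq_card.
by apply/subsetP => y /imsetP [x hx ->]; exact: h1.
Qed.

Lemma odd_tog (T : finType) (A B : {set T}) : odd #|tog A B| = odd #|A| (+) odd #|B|.
Proof.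
have hI : (A :\: B) :&: (B :\: A) = set0.
  by apply/setP => x; rewrite !inE; case: (x \in A); case: (x \in B).
rewrite /tog cardsU hI cards0 subn0 oddD !cardsD.
rewrite oddB ?subset_leq_card ?subsetIl // oddB ?subset_leq_card ?subsetIl //.
rewrite [B :&: A]setIC.
by case: (odd #|A|); case: (odd #|B|); case: (odd #|A :&: B|).
Qed.

Lemma tog_inv (T : finType) (B A : {set T}) : tog (tog A B) B = A.
Proof. by apply/setP => x; rewrite !inE; case: (x \in A); case: (x \in B). Qed.

Lemma card_Ev (T : finType) (a : T) p :
  (#|[set A : {set T} | odd #|A| == p]|).*2 = (2 ^ #|T|)%N.
Proof.
have hsw : #|[set A : {set T} | odd #|A| == p]| = #|[set A : {set T} | odd #|A| == ~~ p]|.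
  apply: (@card_swap _ _ _ (fun A => tog A [set a])) => [A|A|A]; rewrite ?tog_inv //;
  by rewrite !inE odd_tog cards1 /= addbT; case: p; case: (odd #|A|).
have hC : [set A : {set T} | odd #|A| == ~~ p] = ~: [set A : {set T} | odd #|A| == p].
  by clear hsw; apply/setP => A; rewrite !inE; case: p; case: (odd _).
by rewrite -addnn {2}hsw hC cardsC -cardsT -powersetT card_powerset cardsT.
Qed.

Lemma card_Q (T : finType) (a b : T) p : a != b ->
  (#|[set A : {set T} | (a \notin A) && (odd #|A| == p)]|).*2.*2 = (2 ^ #|T|)%N.
Proof.
move=> hab.
set Ev := [set A : {set T} | odd #|A| == p].
set Sa := [set A : {set T} | a \in A].
have hsw : #|Ev :\: Sa| = #|Ev :&: Sa|.
  apply: (@card_swap _ _ _ (fun A => tog A [set a; b])) => [A|A|A]; rewrite ?tog_inv //;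
  rewrite !inE odd_tog cards2 hab /= addbF (negbTE hab) /= eqxx /=;
  by case: (a \in A); case: (odd #|A| == p).
have E : #|Ev| = (#|Ev :\: Sa|).*2 by rewrite -addnn {2}hsw addnC cardsID.
rewrite -(card_Ev a p) -/Ev E; congr (_.*2.*2).
by apply: eq_card => A; rewrite !inE andbC.
Qed.

Lemma ind_sum d k : (\sum_(i < d./2.+1) (k == d - i.*2 : nat))%N =
  (if (k <= d)%N && (odd k == odd d) then 1 else 0)%N.
Proof.
suff H : forall d, ((\sum_(i < d./2.+1) (k == d - i.*2 : nat))%N =
  (if (k <= d)%N && (odd k == odd d) then 1 else 0)%N) /\
  ((\sum_(i < d.+1./2.+1) (k == d.+1 - i.*2 : nat))%N =
  (if (k <= d.+1)%N && (odd k == odd d.+1) then 1 else 0)%N) by case: (H d).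
clear d; elim=> [|d [IH0 IH]]; split.
- rewrite big_ord_recl big_ord0 addn0 /= subn0 leqn0.
  by case: k => [|k] //=; case: (odd k).
- rewrite big_ord_recl big_ord0 addn0 /= subn0.
  by case: k => [|[|k]] //=; case: (odd k).
- exact: IH.
- rewrite /= big_ord_recl /=.
  have -> : (\sum_(i < d./2.+1) (k == d.+2 - (bump 0 i).*2 : nat))%N
          = (\sum_(i < d./2.+1) (k == d - i.*2 : nat))%N.
    by apply: eq_bigr => i _; rewrite /bump /= add1n doubleS subSS subSS.
  rewrite IH0 /= subn0.
  have [->|hne] := eqVneq k d.+2.
    have -> : (d.+2 <= d)%N = false by lia.
    by rewrite eqxx leqnn.
  have [->|hne1] := eqVneq k d.+1.
    have -> : (d.+1 <= d)%N = false by lia.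
    by rewrite /= negbK; case: (odd d) => /=; rewrite andbC.
  have -> : (k <= d.+2)%N = (k <= d)%N by move/eqP: hne; move/eqP: hne1; lia.
  by rewrite negbK.
Qed.

Lemma card_P (T : finType) d :
  #|[set A : {set T} | (#|A| <= d)%N && (odd #|A| == odd d)]| =
  (\sum_(i < d./2.+1) 'C(#|T|, d - i.*2))%N.
Proof.
rewrite -sum1_card big_mkcond /=.
rewrite (eq_bigr (fun A : {set T} => \sum_(i < d./2.+1) (#|A| == d - i.*2 : nat))%N); last first.
  by move=> A _; rewrite ind_sum inE.
rewrite exchange_big /=; apply: eq_bigr => i _.
by rewrite -card_draws -sum1_card [RHS]big_mkcond /=; apply: eq_bigr => A _; rewrite inE.
Qed.

Lemma card_R_big n d : odd n.+1 = false -> (n.+1 <= d.*2.+2)%N ->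
  (#|Rset n d|).*2.*2 = (2 ^ n.+1)%N.
Proof.
move=> hs hd; have h1 : (1 < n.+1)%N by case: n hs {hd}.
transitivity (2 ^ #|'I_n.+1|)%N; last by rewrite card_ord.
rewrite -(card_Q (odd d) (a := ord0) (b := Ordinal h1)) //.
congr (_.*2.*2); apply: eq_card => A; rewrite !inE.
case: (ord0 \in A) => //=; case hp: (odd #|A| == odd d) => //=.
apply/orP; case: (leqP #|A| d) => h; [by left| right].
rewrite -(leq_add2l #|A|) cardsC card_ord.
move/eqP: hp => hp.
rewrite -addnn in hd.
suff : #|A| <> d.+1 by lia.
by move=> e; move: hp; rewrite e /=; case: (odd d).
Qed.

Lemma card_R_small n d : odd n.+1 = false -> (d.*2 < n.+1)%N ->
  #|Rset n d| = #|[set A : {set 'I_n.+1} | (#|A| <= d)%N && (odd #|A| == odd d)]|.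
Proof.
move=> hs hlt; apply/eqP; rewrite eqn_leq; apply/andP; split.
  apply: (@card_le_inj _ _ _ (fun A : {set 'I_n.+1} => if (#|A| <= d)%N then A else ~: A)).
    move=> A B hA hB /=; have h0A := Rset_0 hA; have h0B := Rset_0 hB.
    case: ifP => _; case: ifP => _ e //; last exact: setC_inj.
      by move: h0A; rewrite e inE h0B.
    by move: h0B; rewrite -e inE h0A.
  move=> A hA /=; have hp := Rset_par hA; case: ifP => h; rewrite inE.
    by rewrite h hp eqxx.
  move: hA; rewrite inE h /= => /and3P [_ _ ->]; by rewrite odd_compl // hp eqxx.
apply: (@card_le_inj _ _ _ (fun A : {set 'I_n.+1} => if ord0 \in A then ~: A else A)).
  move=> A B; rewrite !inE => /andP [hA _] /andP [hB _] /=.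
  have contra : forall X Y : {set 'I_n.+1}, (#|X| <= d)%N -> (#|Y| <= d)%N -> ~: X = Y -> False.
    move=> X Y hX hY e; have := cardsC X; rewrite e card_ord => hc.
    have := leq_add hX hY; rewrite hc addnn; by rewrite leqNgt hlt.
  case: ifP => _; case: ifP => _ e //; first exact: setC_inj.
    by case: (contra _ _ hA hB e).
  by case: (contra _ _ hB hA (esym e)).
move=> A; rewrite !inE => /andP [hA hp] /=; case: ifP => h0.
  by rewrite !inE negbK h0 /= odd_compl // hp setCK hA orbT.
by rewrite h0 hp hA.
Qed.

Unset Implicit Arguments.
Set Strict Implicit.

Theorem theorem2p5 (l : nat) (hl : (2 <= l)%N) (d : nat) :
  exists V : {vspace 'rV[K]_#|Xcyc (l.*2).-1|},
    (forall c, c \in V <-> @in_CX (l.*2).-1 d c) /\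
    \dim V = (if (l.-1 <= d)%N then 2 ^ (l.*2 - 2)
              else \sum_(i < d./2.+1) 'C(l.*2, d - i.*2))%N.
Proof.
set n := (l.*2).-1.
have hn : n.+1 = l.*2 by rewrite /n prednK // double_gt0; lia.
have hs : odd n.+1 = false by rewrite hn odd_double.
exists <<Xt n d>>%VS; split; first by move=> c; exact: memX.
rewrite dimX; case: ifP => hd.
  have hb : (n.+1 <= d.*2.+2)%N.
    by rewrite hn -!addnn; move: hd; case: l hl {n hn hs} => // l' _ /= hd'; lia.
  have H := card_R_big hs hb.
  have hm : n.+1 = (l.*2 - 2).+2 by rewrite hn -addnn; lia.
  have H2 : (2 ^ n.+1 = (2 ^ (l.*2 - 2)).*2.*2)%N by rewrite hm !expnS !mul2n.
  rewrite H2 in H.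
  by apply: double_inj; apply: double_inj.
rewrite card_R_small //; last by rewrite hn -!addnn; lia.
by rewrite card_P card_ord hn.
Qed.
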